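(* Let $q=2^{4n+2}$ with $n\ge0$ an integer. Then there exists a linear code over $\mathbb{F}_q$ with parameters $[(\sqrt q-1)(q+1),5,d]_q$ where $d\ge (\sqrt q-1)(q+1)-(2q+2+20\sqrt q)=(\sqrt q-3)q-19\sqrt q-3$. Specifically, with $\xi\in\mathbb{F}_q$ a root of $T^2+T+1$, $\Omega^*=\bigcup_{z\in\mathbb{F}_{\sqrt q}^*}\{(x,y)\in AG(2,q): x^2+xy+\xi y^2=z\}$ and $\mathcal{V}=\langle X,Y,X^2,XY,Y^2\rangle_{\mathbb{F}_q}$, the functional code $\mathcal{C}_{\mathcal{V}}(\Omega^* )$ has these parameters. *)

(* Defs.v *)
From HB Require Import structures.
From mathcomp Require Import all_boot all_order all_algebra.
Set Implicit Arguments. Unset Strict Implicit. Unset Printing Implicit Defensive.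
Import Order.TTheory GRing.Theory Num.Theory.
Local Open Scope ring_scope.

(* sqrt q where q = 2^(4n+2) *)
Definition sqq (n : nat) : nat := (2 ^ (2 * n + 1))%N.

Definition in_subfield_star (F : finFieldType) (s : nat) (z : F) : bool :=
  (z != 0) && (z ^+ s == z).

Definition Omega (F : finFieldType) (s : nat) (xi : F) : {set F * F} :=
  [set p : F * F | in_subfield_star s (p.1 ^+ 2 + p.1 * p.2 + xi * p.2 ^+ 2)].

Definition monomial (F : finFieldType) (i : 'I_5) (p : F * F) : F :=
  match val i with
  | 0%N => p.1 | 1%N => p.2 | 2%N => p.1 ^+ 2 | 3%N => p.1 * p.2 | _ => p.2 ^+ 2
  end.

(* generator matrix of the functional code C_V(Omega): row i is the evaluation
   vector of the i-th basis monomial at the points of Omega (enumerated) *)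
Definition fgenmx (F : finFieldType) (S : {set F * F}) : 'M[F]_(5, #|S|) :=
  \matrix_(i < 5, j < #|S|) monomial i (enum_val j).

Definition wt (F : finFieldType) (N : nat) (w : 'rV[F]_N) : nat :=
  #|[set j : 'I_N | w 0 j != 0]|.

(* Main.v *)
Require Import Defs.
From HB Require Import structures.
From mathcomp Require Import all_boot all_order all_algebra all_field.
From mathcomp Require Import ring zify.
Import Order.TTheory GRing.Theory Num.Theory.
Local Open Scope ring_scope.

Section Char2.
Variable F : finFieldType.
Hypothesis h2 : 2 \in [pchar F].

Lemma frobD k (a b : F) : (a + b) ^+ (2 ^ k) = a ^+ (2 ^ k) + b ^+ (2 ^ k).
Proof.
elim: k a b => [|k IH] a b; first by rewrite !expr1.
by rewrite expnS !exprM sqrrD mulrn_pchar // addr0 IH.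
Qed.

Lemma sqD (a b : F) : (a + b) ^+ 2 = a ^+ 2 + b ^+ 2.
Proof. exact: (frobD 1). Qed.

Lemma fix16 (u : F) : u ^+ 16 = u -> forall k, u ^+ (16 ^ k) = u.
Proof.
move=> hu; elim=> [|k IH]; first by rewrite expr1.
by rewrite expnS exprM hu IH.
Qed.

Variable n : nat.
Hypothesis hF : #|F| = (2 ^ (4 * n + 2))%N.
Variable xi : F.
Hypothesis hxi : xi ^+ 2 + xi + 1 = 0.

Lemma xi2 : xi ^+ 2 = xi + 1.
Proof.
have e : xi ^+ 2 = - (xi + 1) by rewrite -[LHS]subr0 -hxi; ring.
by rewrite e (oppr_pchar2 h2).
Qed.

Lemma card_split : (2 ^ (4 * n + 2) = 4 * 16 ^ n)%N.
Proof. by rewrite expnD expnM mulnC. Qed.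

Lemma no_t t : t ^+ 2 + t != xi.
Proof.
apply/negP => /eqP ht.
have t2 : t ^+ 2 = t + xi.
  by rewrite -ht addrC -addrA (addrr_pchar2 h2) addr0.
have t4 : t ^+ 4 = t + 1.
  rewrite (_ : 4 = 2 * 2)%N // exprM t2 sqD xi2 t2.
  by rewrite addrA -(addrA t) (addrr_pchar2 h2) addr0.
have u4 : (t + 1) ^+ 4 = t.
  rewrite (_ : 4 = 2 ^ 2)%N // frobD // expr1n t4.
  by rewrite -addrA (addrr_pchar2 h2) addr0.
have u16 : (t + 1) ^+ 16 = t + 1.
  by rewrite (_ : 16 = 4 * 4)%N // exprM u4 t4.
have := expf_card t; rewrite hF card_split exprM t4 fix16 //.
move/eqP; rewrite -subr_eq0 addrC addKr; exact/negP/oner_neq0.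
Qed.

Definition Qf (p : F * F) := p.1 ^+ 2 + p.1 * p.2 + xi * p.2 ^+ 2.

Lemma aniso p : Qf p = 0 -> p = (0, 0).
Proof.
case: p => x y; rewrite /Qf /= => h.
have [y0|ny] := eqVneq y 0.
  subst y; move: h; rewrite mulr0 expr0n /= mulr0 !addr0 => /eqP.
  by rewrite expf_eq0 /= => /eqP ->.
exfalso; apply/negP: (no_t (x / y)); apply/eqP.
have e : (x / y) ^+ 2 + x / y + xi = (x ^+ 2 + x * y + xi * y ^+ 2) / y ^+ 2.
  by field.
move: e; rewrite h mul0r => /eqP; rewrite addr_eq0 => /eqP ->.
by rewrite (oppr_pchar2 h2) eqxx.
Qed.

Definition E z := [set p : F * F | Qf p == z].

Lemma E0 : #|E 0| = 1%N.
Proof.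
rewrite (_ : E 0 = [set (0, 0)]) ?cards1 //.
apply/setP => p; rewrite !inE; apply/eqP/eqP => [/aniso //|->].
by rewrite /Qf /= expr0n /= !mulr0 !addr0.
Qed.

Lemma Ez z : z != 0 -> #|E z| = #|E 1|.
Proof.
move=> nz.
pose l := z ^+ (2 ^ (4 * n + 1)).
have l2 : l ^+ 2 = z.
  rewrite -exprM -expnSr (_ : (4 * n + 1).+1 = 4 * n + 2)%N; last by lia.
  by rewrite -hF expf_card.
have nl : l != 0 by rewrite expf_eq0 negb_and nz orbT.
pose g (p : F * F) := (l * p.1, l * p.2).
have ig : injective g.
  by move=> [a b] [c d] [] /(mulfI nl) -> /(mulfI nl) ->.
suff -> : E z = g @: E 1 by rewrite card_imset.
apply/setP => p; rewrite !inE.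
apply/eqP/imsetP => [h|[p' Hp' ->]].
  exists (p.1 / l, p.2 / l).
    rewrite inE; apply/eqP; move: h; rewrite /Qf /= => h.
    have -> : (p.1 / l) ^+ 2 + p.1 / l * (p.2 / l) + xi * (p.2 / l) ^+ 2 =
      (p.1 ^+ 2 + p.1 * p.2 + xi * p.2 ^+ 2) / l ^+ 2 by field.
    by rewrite h l2 divff.
  by rewrite /g /= !mulrA !(mulrC l) -!mulrA !divff // !mulr1; case: p {h}.
move: Hp'; rewrite inE /Qf /= => /eqP h.
have -> : (l * p'.1) ^+ 2 + l * p'.1 * (l * p'.2) + xi * (l * p'.2) ^+ 2 =
  l ^+ 2 * (p'.1 ^+ 2 + p'.1 * p'.2 + xi * p'.2 ^+ 2) by ring.
by rewrite h l2 mulr1.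
Qed.

Lemma sumE : (\sum_(z : F) #|E z| = #|F| * #|F|)%N.
Proof.
rewrite -card_prod -sum1_card (partition_big Qf xpredT) //=.
by apply: eq_bigr => z _; rewrite sum1dep_card.
Qed.

Lemma E1 : #|E 1| = (#|F| + 1)%N.
Proof.
have := sumE; rewrite (bigD1 0) //= E0.
rewrite (eq_bigr (fun _ => #|E 1|)); last by move=> z /Ez.
rewrite sum_nat_cond_const.
have -> : #|[set x : F | x != 0]| = #|F|.-1.
  by rewrite -(cardC1 (0 : F)); apply: eq_card => x; rewrite !inE.
have : (1 < #|F|)%N by rewrite hF; apply: (@ltn_trans 2%N) => //; rewrite -[X in (X < _)%N]expn1 ltn_exp2l //; lia.
move: #|F| #|E 1| => N M hN h.
have h' : (N.-1 * M = N.-1 * N.+1)%N by nia.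
by apply/eqP; rewrite addn1 -(eqn_pmul2l (_ : 0 < N.-1)%N) ?h' //; lia.
Qed.

Definition Kset := [set z : F | z ^+ sqq n == z].

Lemma ss : (#|F| = sqq n * sqq n)%N.
Proof. by rewrite hF /sqq -expnD; congr (_ ^ _)%N; lia. Qed.

Lemma sq2 : (2 <= sqq n)%N.
Proof. rewrite /sqq addn1 expnS; have : (0 < 2 ^ (2 * n))%N by rewrite expn_gt0. lia. Qed.

Lemma Kle : (#|Kset| <= sqq n)%N.
Proof.
pose p : {poly F} := 'X^(sqq n) - 'X.
have sp : size p = (sqq n).+1.
  rewrite /p size_polyDl ?size_polyXn // size_polyN size_polyX; have := sq2; lia.
have pn0 : p != 0 by rewrite -size_poly_eq0 sp.
have := max_poly_roots pn0 (rs := enum Kset).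
rewrite enum_uniq sp ltnS -cardE; apply => //.
by apply/allP => x; rewrite mem_enum inE /root /p !hornerE subr_eq0.
Qed.

Lemma Kge : (sqq n <= #|Kset|)%N.
Proof.
pose T (z : F) := z + z ^+ sqq n.
have TD a b : T (a + b) = T a + T b.
  by rewrite /T /sqq frobD; ring.
have Tss (x : F) : x ^+ (sqq n * sqq n) = x by rewrite -ss; exact: expf_card.
have TK x : T x \in Kset.
  by rewrite inE /T /sqq frobD -exprM Tss addrC.
pose g y := odflt 0 [pick u | T u == y].
have Tg x : T (g (T x)) = T x.
  rewrite /g; case: pickP => [u /eqP //|/(_ x)]; by rewrite eqxx.
pose h x := (x + g (T x), T x).
have ih : injective h.
  by move=> x x' [] + e; rewrite e => /addIr.
have hK x : h x \in setX Kset Kset.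
  rewrite inE /= TK andbT inE.
  have : T (x + g (T x)) = 0 by rewrite TD Tg (addrr_pchar2 h2).
  by rewrite /T => /eqP; rewrite addr_eq0 (oppr_pchar2 h2) eq_sym.
have : (#|F| <= #|Kset| * #|Kset|)%N.
  rewrite -cardsX -cardsT -(card_imset _ ih); apply: subset_leq_card.
  by apply/subsetP => _ /imsetP [x _ ->].
rewrite ss; have := Kle; nia.
Qed.

Lemma Kcard : #|Kset| = sqq n.
Proof. by apply/eqP; rewrite eqn_leq Kle Kge. Qed.

Lemma Kstar : #|[set z : F | in_subfield_star (sqq n) z]| = (sqq n).-1.
Proof.
have -> : [set z : F | in_subfield_star (sqq n) z] = Kset :\ 0.
  by apply/setP => z; rewrite !inE /in_subfield_star.
rewrite -Kcard (cardsD1 0 Kset) [in X in _ = X.-1]inE expr0n /=.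
have -> : (sqq n == 0%N) = false by have := sq2; case: (sqq n).
by rewrite eqxx.
Qed.

Lemma Omcard : #|Omega (sqq n) xi| = ((sqq n - 1) * (2 ^ (4 * n + 2) + 1))%N.
Proof.
rewrite -sum1_card (partition_big Qf (in_subfield_star (sqq n))); last first.
  by move=> p; rewrite inE.
rewrite (eq_bigr (fun _ => #|E 1|)); last first.
  move=> z hz; rewrite sum1dep_card -(@Ez z); last by case/andP: hz.
  by apply: eq_card => p; rewrite !inE /Qf; case: eqP => [->|]; rewrite ?hz ?andbF.
by rewrite (sum_nat_cond_const (fun z : F => in_subfield_star (sqq n) z)) Kstar E1 hF subn1.
Qed.
End Char2.
Lemma card_sum (T : finType) (P : pred T) : #|[set t | P t]| = (\sum_t (P t : nat))%N.
Proof. by rewrite -sum1dep_card big_mkcond; apply: eq_bigr => t _; case: (P t). Qed.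

Lemma card_eqf (T : finType) (P Q : pred T) :
  (forall t, P t = Q t) -> #|[set t | P t]| = #|[set t | Q t]|.
Proof. by move=> h; apply: eq_card => t; rewrite !inE h. Qed.

Section Zeros.
Variable F : finFieldType.

Lemma roots_Poly (s : seq F) : Poly s != 0 -> (#|[set x | root (Poly s) x]| < size s)%N.
Proof.
move=> pn0; have := max_poly_roots pn0 (rs := enum [set x | root (Poly s) x]).
rewrite enum_uniq -cardE => /(_ _ isT) h; apply: leq_trans (h _) (size_Poly _).
by apply/allP => x; rewrite mem_enum inE.
Qed.

Lemma quad_roots (al be ga : F) : al != 0 ->
  (#|[set x : F | (al * x ^+ 2 + be * x + ga == 0)%R]| <= 2)%N.
Proof.
move=> na; have pn0 : Poly [:: ga; be; al] != 0.
  by apply: contraNneq na => h; rewrite -[al]/([:: ga; be; al]`_2) -coef_Poly h coef0.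
have := roots_Poly _ pn0; rewrite ltnS; apply: leq_trans; apply: eq_leq.
apply: card_eqf => x; rewrite /root horner_Poly /=; congr (_ == _); ring.
Qed.

Lemma lin_roots (be ga : F) : be != 0 ->
  (#|[set x : F | (be * x + ga == 0)%R]| <= 1)%N.
Proof.
move=> na; have pn0 : Poly [:: ga; be] != 0.
  by apply: contraNneq na => h; rewrite -[be]/([:: ga; be]`_1) -coef_Poly h coef0.
have := roots_Poly _ pn0; rewrite ltnS; apply: leq_trans; apply: eq_leq.
apply: card_eqf => x; rewrite /root horner_Poly /=; congr (_ == _); ring.
Qed.

Lemma card_x (f : F -> F -> bool) :
  #|[set p : F * F | f p.1 p.2]| = (\sum_x #|[set y | f x y]|)%N.
Proof.
rewrite card_sum -(pair_big xpredT xpredT (fun x y => (f x y : nat))) /=.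
by apply: eq_bigr => x _; rewrite card_sum.
Qed.

Lemma card_y (f : F -> F -> bool) :
  #|[set p : F * F | f p.1 p.2]| = (\sum_y #|[set x | f x y]|)%N.
Proof.
rewrite card_sum -(pair_big xpredT xpredT (fun x y => (f x y : nat))) /=.
rewrite exchange_big /=.
by apply: eq_bigr => x _; rewrite card_sum.
Qed.

Definition fz (a b c d e : F) (p : F * F) :=
  a * p.1 + b * p.2 + c * p.1 ^+ 2 + d * (p.1 * p.2) + e * p.2 ^+ 2.

Lemma sum_const_le (G : F -> nat) k : (forall y, G y <= k)%N ->
  (\sum_y G y <= #|F| * k)%N.
Proof.
move=> h; apply: (@leq_trans (\sum_(y : F) k)).
  by apply: leq_sum => y _; apply: h.
by rewrite sum_nat_const.
Qed.

Lemma zeros_le a b c d e : [|| a != 0, b != 0, c != 0, d != 0 | e != 0] ->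
  (#|[set p | (fz a b c d e p == 0)%R]| <= 2 * #|F|)%N.
Proof.
move=> nz.
have [hc|c0] := eqVneq c 0; last first.
  rewrite (card_y (fun x y => fz a b c d e (x, y) == 0)) mulnC.
  apply: sum_const_le => y.
  rewrite (@card_eqf _ _ (fun x => c * x ^+ 2 + (a + d * y) * x + (b * y + e * y ^+ 2) == 0)).
    exact: quad_roots.
  by move=> x; rewrite /fz /=; congr (_ == _); ring.
have [he|e0] := eqVneq e 0; last first.
  rewrite (card_x (fun x y => fz a b c d e (x, y) == 0)) mulnC.
  apply: sum_const_le => x.
  rewrite (@card_eqf _ _ (fun y => e * y ^+ 2 + (b + d * x) * y + (a * x + c * x ^+ 2) == 0)).
    exact: quad_roots.
  by move=> y; rewrite /fz /=; congr (_ == _); ring.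
subst c e.
have [hd|d0] := eqVneq d 0; last first.
  rewrite (card_y (fun x y => fz a b 0 d 0 (x, y) == 0)).
  rewrite (bigD1 (- a / d)) //= mul2n -addnn leq_add //.
    by rewrite -cardsT subset_leq_card // subsetT.
  apply: leq_trans (_ : \sum_(y | y != - a / d) 1 <= _)%N.
    apply: leq_sum => y hy.
    rewrite (@card_eqf _ _ (fun x => (a + d * y) * x + b * y == 0)).
      apply: lin_roots; apply: contraNneq hy => h; apply/eqP.
      apply: (mulfI d0).
      by rewrite mulrCA divff // mulr1; apply/eqP; rewrite -addr_eq0 addrC h.
    by move=> x; rewrite /fz /=; congr (_ == _); ring.
  by rewrite sum1dep_card -cardsT subset_leq_card // subsetT.
subst d.
have [ha|a0] := eqVneq a 0; last first.
  rewrite (card_y (fun x y => fz a b 0 0 0 (x, y) == 0)).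
  apply: leq_trans (@sum_const_le _ 1 _) _; last by lia.
  move=> y; rewrite (@card_eqf _ _ (fun x => a * x + b * y == 0)).
    exact: lin_roots.
  by move=> x; rewrite /fz /=; congr (_ == _); ring.
subst a.
have b0 : b != 0 by move: nz; rewrite !eqxx /= orbF.
rewrite (card_x (fun x y => fz 0 b 0 0 0 (x, y) == 0)).
apply: leq_trans (@sum_const_le _ 1 _) _; last by lia.
move=> x; rewrite (@card_eqf _ _ (fun y => b * y + 0 == 0)).
  exact: lin_roots.
by move=> y; rewrite /fz /=; congr (_ == _); ring.
Qed.

Lemma small (h2 : 2 \in [pchar F]) (xi : F) (xi2 : xi ^+ 2 = xi + 1) a b c d e :
  (forall p : F * F, p.1 ^+ 2 + p.1 * p.2 + xi * p.2 ^+ 2 = 1 -> fz a b c d e p = 0) ->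
  [&& a == 0, b == 0, c == 0, d == 0 & e == 0].
Proof.
move=> hz.
have two : (2%:R : F) = 0 := pcharf0 h2.
  have q1 : (1) ^+ 2 + (1) * (0) + xi * (0) ^+ 2 = 1 + 2%:R * (0%:R + 0%:R * xi) by ring: xi2.
  have q2 : (0) ^+ 2 + (0) * (xi) + xi * (xi) ^+ 2 = 1 + 2%:R * (0%:R + 1%:R * xi) by ring: xi2.
  have q3 : (xi) ^+ 2 + (xi) * (xi) + xi * (xi) ^+ 2 = 1 + 2%:R * (1%:R + 2%:R * xi) by ring: xi2.
  have q4 : (1) ^+ 2 + (1) * (xi + 1) + xi * (xi + 1) ^+ 2 = 1 + 2%:R * (2%:R + 3%:R * xi) by ring: xi2.
  have q5 : (xi) ^+ 2 + (xi) * (xi + 1) + xi * (xi + 1) ^+ 2 = 1 + 2%:R * (2%:R + 4%:R * xi) by ring: xi2.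
  have z1 : fz a b c d e (1, 0) = 0 by apply: hz; rewrite /= q1 two mul0r addr0.
  have z2 : fz a b c d e (0, xi) = 0 by apply: hz; rewrite /= q2 two mul0r addr0.
  have z3 : fz a b c d e (xi, xi) = 0 by apply: hz; rewrite /= q3 two mul0r addr0.
  have z4 : fz a b c d e (1, xi + 1) = 0 by apply: hz; rewrite /= q4 two mul0r addr0.
  have z5 : fz a b c d e (xi, xi + 1) = 0 by apply: hz; rewrite /= q5 two mul0r addr0.
  have ka : a = (0%:R + 0%:R * xi) * fz a b c d e (1, 0) + (0%:R + 1%:R * xi) * fz a b c d e (0, xi) + (0%:R + 1%:R * xi) * fz a b c d e (xi, xi) + (1%:R + 1%:R * xi) * fz a b c d e (1, xi + 1) + (1%:R + 1%:R * xi) * fz a b c d e (xi, xi + 1) - 2%:R * ((1%:R + 2%:R * xi) * a + (3%:R + 4%:R * xi) * b + (2%:R + 3%:R * xi) * c + (3%:R + 5%:R * xi) * d + (6%:R + 10%:R * xi) * e) by rewrite /fz /=; ring: xi2.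
  have kb : b = (1%:R + 0%:R * xi) * fz a b c d e (1, 0) + (0%:R + 0%:R * xi) * fz a b c d e (0, xi) + (0%:R + 1%:R * xi) * fz a b c d e (xi, xi) + (1%:R + 0%:R * xi) * fz a b c d e (1, xi + 1) + (0%:R + 1%:R * xi) * fz a b c d e (xi, xi + 1) - 2%:R * ((2%:R + 1%:R * xi) * a + (1%:R + 2%:R * xi) * b + (2%:R + 2%:R * xi) * c + (2%:R + 3%:R * xi) * d + (3%:R + 5%:R * xi) * e) by rewrite /fz /=; ring: xi2.
  have kc : c = (1%:R + 0%:R * xi) * fz a b c d e (1, 0) + (0%:R + 1%:R * xi) * fz a b c d e (0, xi) + (0%:R + 1%:R * xi) * fz a b c d e (xi, xi) + (1%:R + 1%:R * xi) * fz a b c d e (1, xi + 1) + (1%:R + 1%:R * xi) * fz a b c d e (xi, xi + 1) - 2%:R * ((2%:R + 2%:R * xi) * a + (3%:R + 4%:R * xi) * b + (2%:R + 3%:R * xi) * c + (3%:R + 5%:R * xi) * d + (6%:R + 10%:R * xi) * e) by rewrite /fz /=; ring: xi2.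
  have kd : d = (1%:R + 0%:R * xi) * fz a b c d e (1, 0) + (1%:R + 0%:R * xi) * fz a b c d e (0, xi) + (1%:R + 0%:R * xi) * fz a b c d e (xi, xi) + (1%:R + 0%:R * xi) * fz a b c d e (1, xi + 1) + (1%:R + 0%:R * xi) * fz a b c d e (xi, xi + 1) - 2%:R * ((1%:R + 1%:R * xi) * a + (1%:R + 2%:R * xi) * b + (2%:R + 1%:R * xi) * c + (1%:R + 2%:R * xi) * d + (3%:R + 4%:R * xi) * e) by rewrite /fz /=; ring: xi2.
  have ke : e = (1%:R + 1%:R * xi) * fz a b c d e (1, 0) + (0%:R + 1%:R * xi) * fz a b c d e (0, xi) + (1%:R + 0%:R * xi) * fz a b c d e (xi, xi) + (1%:R + 1%:R * xi) * fz a b c d e (1, xi + 1) + (1%:R + 0%:R * xi) * fz a b c d e (xi, xi + 1) - 2%:R * ((1%:R + 2%:R * xi) * a + (2%:R + 3%:R * xi) * b + (2%:R + 2%:R * xi) * c + (2%:R + 3%:R * xi) * d + (4%:R + 7%:R * xi) * e) by rewrite /fz /=; ring: xi2.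
apply/and5P; split; apply/eqP; [rewrite ka|rewrite kb|rewrite kc|rewrite kd|rewrite ke];
  by rewrite z1 z2 z3 z4 z5 two; ring.
Qed.
End Zeros.
Arguments fz {F}.
Arguments zeros_le {F}.
Lemma rowfz (F : finFieldType) (c : 'rV[F]_5) (S : {set F * F}) j :
  (c *m fgenmx S) 0 j = fz (c 0 (inord 0)) (c 0 (inord 1)) (c 0 (inord 2)) (c 0 (inord 3)) (c 0 (inord 4)) (enum_val j).
Proof.
rewrite !mxE !big_ord_recl big_ord0 !mxE /= /fz /monomial /=.
have o k (i : 'I_5) : val i = k -> c 0 i = c 0 (inord k) by move=> <-; rewrite inord_val.
rewrite (o 0%N ord0) // (o 1%N (lift ord0 ord0)) // (o 2%N (lift ord0 (lift ord0 ord0))) //.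
rewrite (o 3%N (lift ord0 (lift ord0 (lift ord0 ord0)))) //.
rewrite (o 4%N (lift ord0 (lift ord0 (lift ord0 (lift ord0 ord0))))) //.
by rewrite addr0 !addrA.
Qed.

Theorem corollary2 (n : nat) (F : finFieldType) (hF : #|F| = (2 ^ (4 * n + 2))%N)
  (xi : F) (hxi : xi ^+ 2 + xi + 1 = 0) :
  let q := (2 ^ (4 * n + 2))%N in
  let s := sqq n in
  let Om := Omega s xi in
  #|Om| = ((s - 1) * (q + 1))%N /\
  \rank (fgenmx Om) = 5%N /\
  (forall w : 'rV[F]_#|Om|, (w <= fgenmx Om)%MS -> w != 0 ->
     ((s%:Z - 1) * (q%:Z + 1) - (2 * q%:Z + 2 + 20 * s%:Z) <= (wt w)%:Z)%R).
Proof.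
move=> q s Om.
have h2 : 2 \in [pchar F] by apply: (card_finPcharP hF).
have hOm : #|Om| = ((s - 1) * (q + 1))%N by exact: (Omcard _ h2 _ hF _ hxi).
have s2 : (2 <= s)%N by exact: (sq2 _ h2 _ hF).
have Hc (c : 'rV[F]_5) : c != 0 ->
    [|| c 0 (inord 0) != 0, c 0 (inord 1) != 0, c 0 (inord 2) != 0,
        c 0 (inord 3) != 0 | c 0 (inord 4) != 0].
  move=> cn; apply: contraNT cn; rewrite !negb_or !negbK.
  case/and5P => /eqP e0 /eqP e1 /eqP e2 /eqP e3 /eqP e4.
  apply/eqP/rowP => i; rewrite !mxE.
  have -> : c 0 i = c 0 (inord i) by rewrite inord_val.
  by case: i => [[|[|[|[|[|k]]]]] hk] //=.
have vz (c : 'rV[F]_5) p : c *m fgenmx Om = 0 -> p \in Om ->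
    fz (c 0 (inord 0)) (c 0 (inord 1)) (c 0 (inord 2)) (c 0 (inord 3)) (c 0 (inord 4)) p = 0.
  move=> hc hp; rewrite -(enum_rankK_in hp hp) -rowfz hc mxE //.
split=> //; split.
  apply/eqP; change (row_free (fgenmx Om)); rewrite -kermx_eq0 -submx0.
  apply/row_subP => i.
  set u := row i (kermx (fgenmx Om)).
  have uA : u *m fgenmx Om = 0 by apply/sub_kermxP; exact: row_sub.
  rewrite submx0; apply: contraT => un.
  have dis := Hc u un.
  have [n0|n1] := eqVneq n 0%N.
    have := small _ h2 _ (xi2 _ h2 _ hxi) (u 0 (inord 0)) (u 0 (inord 1))
      (u 0 (inord 2)) (u 0 (inord 3)) (u 0 (inord 4)).
    have hz : forall p : F * F, p.1 ^+ 2 + p.1 * p.2 + xi * p.2 ^+ 2 = 1 ->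
        fz (u 0 (inord 0)) (u 0 (inord 1)) (u 0 (inord 2)) (u 0 (inord 3)) (u 0 (inord 4)) p = 0.
      move=> p hp; apply: vz => //; rewrite inE hp /in_subfield_star /s n0 /=.
      by rewrite oner_neq0 expr1n eqxx.
    move/(_ hz).
    move=> /and5P[/eqP h0 /eqP h1 /eqP h3 /eqP h4 /eqP h5].
    by move: dis; rewrite h0 h1 h3 h4 h5 eqxx.
  have s8 : (8 <= s)%N.
    by rewrite /s /sqq (_ : 8 = 2 ^ 3)%N // leq_exp2l //; lia.
  have := zeros_le _ _ _ _ _ dis; rewrite hF.
  have : (#|Om| <= #|[set p | (fz (u 0 (inord 0)) (u 0 (inord 1)) (u 0 (inord 2))
          (u 0 (inord 3)) (u 0 (inord 4)) p == 0)%R]|)%N.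
    by apply: subset_leq_card; apply/subsetP => p hp; rewrite inE vz.
  rewrite hOm /q; move: (2 ^ (4 * n + 2))%N => Q.
  move: (#|_|) => Z; nia.
move=> w /submxP [c ->] wn0.
have cn : c != 0 by apply: contraNneq wn0 => ->; rewrite mul0mx.
have dis := Hc c cn.
set Z := [set j : 'I_#|Om| | (c *m fgenmx Om) 0 j == 0].
have hZ : (#|Z| <= 2 * q)%N.
  rewrite /q -hF; apply: leq_trans (zeros_le _ _ _ _ _ dis).
  rewrite -(card_imset _ enum_val_inj); apply: subset_leq_card.
  apply/subsetP => _ /imsetP [j hj ->]; rewrite inE -rowfz.
  by move: hj; rewrite inE.
have hwt : (wt (c *m fgenmx Om) + #|Z| = #|Om|)%N.
  rewrite -[X in (_ = X)%N]card_ord -(cardsC Z) addnC; congr (_ + _)%N.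
  by apply: eq_card => j; rewrite !inE.
move: hwt hZ; move: (wt _) (#|Z|) => W z; rewrite hOm => h1 h3.
have : (W + z)%:Z = ((s%:Z - 1) * (q%:Z + 1))%R.
  by rewrite h1 PoszM subzn ?(leq_trans _ s2) // PoszD.
lia.
Qed.
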